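(* Let $G$ be a graph containing neither the cycle $C_4$ nor the cycle $C_6$ as a subgraph. For every MLD-set $S\subseteq V(G)$, the set $S\cup\pi(S)$ is a locating-dominating set of $G$. Consequently, $\gamma_L(G)\le \gamma_M(G)^2$.
   Context: All graphs are finite, simple, undirected and connected, with at least 2 vertices; $d(u,v)$ is the shortest-path distance and $N(x)$ the open neighborhood of $x$. A set $S\subseteq V(G)$ is resolving if for all distinct $x,y\in V(G)$ there is $u\in S$ with $d(u,x)\ne d(u,y)$; dominating if every vertex not in $S$ has a neighbor in $S$. An MLD-set is a set that is both resolving and dominating; $\gamma_M(G)$ is the minimum size of an MLD-set. A locating-dominating set (LD-set) is a dominating set $S$ such that $N(x)\cap S\ne N(y)\cap S$ for all distinct $x,y\in V(G)\setminus S$; $\gamma_L(G)$ is its minimum size. For $S\subseteq V(G)$ and $u,v\in S$, $\pi(u,v)$ is the set of vertices $u',v'$ such that $(u,u',v',v)$ is a path in $G$ (four distinct vertices with $uu',u'v',v'v\in E(G)$), and $\pi(S)=\bigcup_{u,v\in S}\pi(u,v)$. *)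

(* Defs.v *)
(* A graph is a finite type T with an edge relation e : rel T;
   simplicity (symmetric, irreflexive), connectedness and |V| >= 2 are
   hypotheses of the theorem. *)
From mathcomp Require Import all_boot.
Set Implicit Arguments. Unset Strict Implicit. Unset Printing Implicit Defensive.

Section Graph.
Variables (T : finType) (e : rel T).

Definition nbhd (x : T) : {set T} := [set y | e x y].

Fixpoint ball (n : nat) (u : T) : {set T} :=
  match n with
  | 0 => [set u]
  | n'.+1 => ball n' u :|: [set y | [exists x in ball n' u, e x y]]
  end.

(* shortest-path distance: least n with v in ball n u (correct for connected
   graphs, where every distance is < #|T|) *)
Definition dist (u v : T) : nat :=
  find (fun n => v \in ball n u) (iota 0 #|T|).

Definition connected_graph : Prop := forall u v : T, connect e u v.

Definition has_cycle (k : nat) : Prop :=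
  exists f : 'I_k -> T, injective f /\ forall i : 'I_k, e (f i) (f (ordS i)).

Definition resolving (S : {set T}) : bool :=
  [forall x, forall y, (x != y) ==> [exists u in S, dist u x != dist u y]].

Definition dominating (S : {set T}) : bool :=
  [forall x, (x \notin S) ==> [exists y in S, e x y]].

Definition MLD_set (S : {set T}) : bool := resolving S && dominating S.

Definition LD_set (S : {set T}) : bool :=
  dominating S &&
  [forall x, forall y,
     [&& x != y, x \notin S & y \notin S] ==> (nbhd x :&: S != nbhd y :&: S)].

Definition pi_pair (u v : T) : {set T} :=
  [set w | [exists u', exists v',
     [&& uniq [:: u; u'; v'; v], e u u', e u' v', e v' v & (w == u') || (w == v')]]].

Definition pi_set (S : {set T}) : {set T} :=
  \bigcup_(u in S) \bigcup_(v in S) pi_pair u v.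

(* minimum sizes; V(G) is always both an MLD-set and an LD-set *)
Definition gammaM : nat := \big[minn/#|T|]_(S : {set T} | MLD_set S) #|S|.
Definition gammaL : nat := \big[minn/#|T|]_(S : {set T} | LD_set S) #|S|.

End Graph.

(* Main.v *)
Require Import Defs.
From mathcomp Require Import all_boot zify.
Set Implicit Arguments. Unset Strict Implicit. Unset Printing Implicit Defensive.

Section Dist.
Variables (T : finType) (e : rel T).
Hypothesis e_conn : connected_graph e.

Lemma ball_step n u a b : a \in ball e n u -> e a b -> b \in ball e n.+1 u.
Proof.
move=> Ha Hab; rewrite /= in_setU; apply/orP; right; rewrite inE.
by apply/existsP; exists a; rewrite Ha Hab.
Qed.

Lemma path_ball x p : path e x p -> last x p \in ball e (size p) x.
Proof.
elim/last_ind: p => [|p y IH]; first by rewrite /= inE.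
rewrite rcons_path last_rcons size_rcons => /andP[/IH Hp Hy].
exact: ball_step Hp Hy.
Qed.

Lemma reach u v : exists2 n, n < #|T| & v \in ball e n u.
Proof.
have /connectP [p Hp ->] := e_conn u v.
case: (shortenP Hp) => p' Hp' U _.
exists (size p'); last exact: path_ball.
move/card_uniqP: U => U. have := max_card (mem (u :: p')). rewrite U /=. lia.
Qed.

Lemma dist_le u v n : v \in ball e n u -> dist e u v <= n.
Proof.
move=> Hv; rewrite /dist.
case: (ltnP n #|T|) => Hn.
- rewrite leqNgt; apply/negP => Hlt.
  have := before_find 0 Hlt. by rewrite nth_iota // add0n Hv.
- apply: leq_trans (find_size _ _) _. by rewrite size_iota.
Qed.

Lemma dist_ball u v : v \in ball e (dist e u v) u.
Proof.
have [n Hn Hv] := reach u v.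
have Hh : has (fun n => v \in ball e n u) (iota 0 #|T|).
  by apply/hasP; exists n => //; rewrite mem_iota.
have Hf : find (fun n => v \in ball e n u) (iota 0 #|T|) < #|T|.
  by have := Hh; rewrite has_find size_iota.
have := nth_find 0 Hh. by rewrite /dist nth_iota.
Qed.

Lemma dist_edge u a b : e a b -> dist e u b <= (dist e u a).+1.
Proof. move=> Hab; apply: dist_le; exact: ball_step (dist_ball u a) Hab. Qed.

Lemma dist_eq0 u v : dist e u v = 0 -> u = v.
Proof. move=> H; have := dist_ball u v; rewrite H /= inE => /eqP ->. by []. Qed.

Lemma dist_pred u v : u != v -> exists w, e w v /\ (dist e u w).+1 = dist e u v.
Proof.
move=> uv.
case Hd: (dist e u v) => [|d]; first by move/dist_eq0: Hd => E; rewrite E eqxx in uv.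
have := dist_ball u v; rewrite Hd /= in_setU => /orP [Hv|].
  by have := dist_le Hv; rewrite Hd ltnn.
rewrite inE => /existsP [w /andP [Hw Hwv]].
exists w; split => //.
have h1 := dist_le Hw. have h2 := dist_edge u Hwv. lia.
Qed.
End Dist.
Section Main.
Variables (T : finType) (e : rel T).
Hypotheses (e_sym : symmetric e) (e_irr : irreflexive e) (e_conn : connected_graph e).

Definition mid (a d b c : T) := [&& uniq [:: a; b; c; d], e a b, e b c & e c d].

Lemma uniq4 (a b c d : T) : a != b -> a != c -> a != d -> b != c -> b != d -> c != d ->
  uniq [:: a; b; c; d].
Proof. by move=> ab ac ad bc bd cd; rewrite /= !inE !negb_or ab ac ad bc bd cd. Qed.

Lemma neqS (A : {set T}) a b : a \in A -> b \notin A -> a != b.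
Proof. by move=> Ha; apply: contraNneq => <-. Qed.

Lemma neqE a b : e a b -> a != b.
Proof. by move=> H; apply: contraTneq H => ->; rewrite e_irr. Qed.

Lemma key_half (S L : {set T}) x y u :
  dominating e S -> S \subset L ->
  (forall a d b c, a \in S -> d \in S -> mid a d b c -> (b \in L) || (c \in L)) ->
  (forall a d b c, a \in S -> d \in S -> mid a d b c -> ~~ e b d -> c \in L) ->
  x \notin L -> y \notin L -> (forall z, z \in L -> e x z = e y z) ->
  u \in S -> dist e u x < dist e u y -> False.
Proof.
move=> /forallP domS SL HH HC xL yL Hxy uS lt.
have nS z : z \notin L -> z \notin S.
  by move=> zL; apply/negP => zS; rewrite (subsetP SL z zS) in zL.
have xS := nS _ xL.
have /existsP [s /andP [sS xs]] := implyP (domS x) xS.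
have sL : s \in L by rewrite (subsetP SL).
have ys : e y s by rewrite -Hxy.
have ux : u != x by apply: neqS uS xS.
have [w [wx dw]] := dist_pred e_conn ux.
have dys' : dist e u y <= (dist e u s).+1 by apply: (dist_edge e_conn); rewrite e_sym.
have wL : w \notin L.
  apply/negP => wL. have yw : e w y by rewrite e_sym -Hxy // e_sym.
  have := dist_edge e_conn u yw; rewrite dw => h.
  by move: lt; rewrite ltnNge h.
have wS := nS _ wL.
have uw : u != w by apply: neqS uS wS.
have [z [zw dz]] := dist_pred e_conn uw.
have /existsP [r /andP [rS wr]] := implyP (domS w) wS.
have rs : r = s.
  apply/eqP; apply/negPn/negP => rs.
  have Hm : mid r s w x.
    apply/and4P; split; [|by rewrite e_sym|by []|by []].
    apply: uniq4.
    - exact: neqS rS wS.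
    - exact: neqS rS xS.
    - exact: rs.
    - exact: neqE wx.
    - by rewrite eq_sym; apply: neqS sS wS.
    - by rewrite eq_sym; apply: neqS sS xS.
  by have := HH r s w x rS sS Hm; rewrite (negPf wL) (negPf xL).
have ws : e w s by rewrite -rs.
have zs : ~~ e z s.
  apply/negP => zs. have := dist_edge e_conn u zs => h.
  have : dist e u y <= dist e u x.
    by rewrite -dw -dz; apply: leq_trans dys' _; rewrite ltnS.
  by rewrite leqNgt lt.
case zS : (z \in S).
- have zs' : z != s.
    apply/negP => /eqP E. rewrite E in dz zw.
    have : dist e u y <= dist e u x by rewrite -dw -dz ltnW.
    by rewrite leqNgt lt.
  have Hm : mid z s w x.
    apply/and4P; split; [|by []|by []|by []].
    apply: uniq4.
    - exact: neqS zS wS.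
    - exact: neqS zS xS.
    - exact: zs'.
    - exact: neqE wx.
    - by rewrite eq_sym; apply: neqS sS wS.
    - by rewrite eq_sym; apply: neqS sS xS.
  by have := HH z s w x zS sS Hm; rewrite (negPf wL) (negPf xL).
- have /existsP [t /andP [tS zt]] := implyP (domS z) (negbT zS).
  have ts : t != s by apply: contraNneq zs => <-.
  have Hm : mid t s z w.
    apply/and4P; split; [|by rewrite e_sym|by []|by []].
    apply: uniq4.
    - by apply: neqS tS (negbT zS).
    - by apply: neqS tS wS.
    - exact: ts.
    - exact: neqE zw.
    - by rewrite eq_sym; apply: neqS sS (negbT zS).
    - by rewrite eq_sym; apply: neqS sS wS.
  by have := HC t s z w tS sS Hm zs; rewrite (negPf wL).
Qed.

Lemma key (S L : {set T}) :
  MLD_set e S -> S \subset L ->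
  (forall a d b c, a \in S -> d \in S -> mid a d b c -> (b \in L) || (c \in L)) ->
  (forall a d b c, a \in S -> d \in S -> mid a d b c -> ~~ e b d -> c \in L) ->
  LD_set e L.
Proof.
case/andP => resS domS SL HH HC.
apply/andP; split.
  apply/forallP => x; apply/implyP => xL.
  have xS : x \notin S by apply/negP => xS; rewrite (subsetP SL x xS) in xL.
  have /existsP [y /andP [yS xy]] := implyP (forallP domS x) xS.
  by apply/existsP; exists y; rewrite xy (subsetP SL).
apply/forallP => x; apply/forallP => y; apply/implyP => /and3P [xy xL yL].
apply/negP => /eqP Heq.
have Hxy z : z \in L -> e x z = e y z.
  move=> zL; have := congr1 (fun A : {set T} => z \in A) Heq.
  by rewrite /nbhd !inE zL !andbT.
have /existsP [u /andP [uS duv]] := implyP (forallP (forallP resS x) y) xy.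
case: (ltngtP (dist e u x) (dist e u y)) duv => // lt _.
- exact: (key_half domS SL HH HC xL yL Hxy uS lt).
- apply: (key_half domS SL HH HC yL xL _ uS lt).
  by move=> z zL; rewrite Hxy.
Qed.

Lemma part1 (S : {set T}) : MLD_set e S -> LD_set e (S :|: pi_set e S).
Proof.
move=> H; apply: (key H).
- by apply/subsetP => z zS; rewrite in_setU zS.
- move=> a d b c aS dS Hm; apply/orP; left; rewrite in_setU; apply/orP; right.
  apply/bigcupP; exists a => //; apply/bigcupP; exists d => //.
  rewrite inE; apply/existsP; exists b; apply/existsP; exists c.
  by case/and4P: Hm => U ab bc cd; rewrite U ab bc cd eqxx.
- move=> a d b c aS dS Hm _; rewrite in_setU; apply/orP; right.
  apply/bigcupP; exists a => //; apply/bigcupP; exists d => //.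
  rewrite inE; apply/existsP; exists b; apply/existsP; exists c.
  by case/and4P: Hm => U ab bc cd; rewrite U ab bc cd eqxx orbT.
Qed.

Lemma uniq4E (a b c d : T) : uniq [:: a; b; c; d] ->
  a != b /\ a != c /\ a != d /\ b != c /\ b != d /\ c != d.
Proof.
move=> U; do ! split; apply: (contraTneq _ U) => E; rewrite ?E /= !inE ?eqxx ?orbT ?andbF //=.
Qed.

Lemma uniq6 (a b c d f g : T) :
  a != b -> a != c -> a != d -> a != f -> a != g ->
  b != c -> b != d -> b != f -> b != g ->
  c != d -> c != f -> c != g ->
  d != f -> d != g -> f != g ->
  uniq [:: a; b; c; d; f; g].
Proof.
move=> ab ac ad af ag bc bd bf bg cd cf cg df dg fg.
by rewrite /= !inE !negb_or ab ac ad af ag bc bd bf bg cd cf cg df dg fg.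
Qed.

Lemma cycle_seq k (l : seq T) x0 : size l = k -> uniq l ->
  (forall i, i < k -> e (nth x0 l i) (nth x0 l (i.+1 %% k))) -> has_cycle e k.
Proof.
move=> sz U H; exists (fun i : 'I_k => nth x0 l i); split.
- move=> i j /eqP; rewrite nth_uniq ?sz // => /eqP E; exact: val_inj.
- move=> i; exact: H i (ltn_ord i).
Qed.

Lemma mid_rev a d b c : mid a d b c -> mid d a c b.
Proof.
case/and4P => U ab bc cd; apply/and4P; split; rewrite 1?e_sym //.
by rewrite -rev_uniq.
Qed.

Lemma C4_of a d b c : mid a d b c -> e b d -> e c a -> has_cycle e 4.
Proof.
case/and4P => U ab bc cd bd ca.
have [? [? [? [? [? ?]]]]] := uniq4E U.
apply: (@cycle_seq 4 [:: a; b; d; c] a) => //.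
  by apply: uniq4; rewrite // eq_sym.
case=> [|[|[|[|i]]]] //= _.
by rewrite e_sym.
Qed.


Definition Cset (t s : T) : {set T} := [set c | [exists b, mid t s b c && ~~ e b s]].
Definition Jset (S : {set T}) : {set T} := \bigcup_(t in S) \bigcup_(s in S) Cset t s.

Lemma Cset_tt t : Cset t t = set0.
Proof.
apply/setP => c; rewrite /Cset !inE; apply/negbTE/negP => /existsP [b /andP [/and4P [U _ _ _] _]].
by move: U; rewrite /= !inE eqxx !orbT.
Qed.

Lemma Cset_le1 t s : ~ has_cycle e 4 -> ~ has_cycle e 6 -> #|Cset t s| <= 1.
Proof.
move=> n4 n6; apply/card_le1_eqP => c c'.
rewrite /Cset !inE => /existsP [b /andP [m1 bs]] /existsP [b' /andP [m2 b's]].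
change (c' = c); apply/eqP; rewrite eq_sym; apply/negPn/negP => cc'.
case/and4P: (m1) => U1 tb bc cs.
case/and4P: (m2) => U2 tb' bc' cs'.
have [tb0 [tc0 [ts0 [bc0 [bs0 cs0]]]]] := uniq4E U1.
have [tb1 [tc1 [ts1 [bc1 [bs1 cs1]]]]] := uniq4E U2.
case: (eqVneq b b') => [E|bb'].
  subst b'; apply: n4.
  apply: (@cycle_seq 4 [:: b; c; s; c'] b) => //.
    by apply: uniq4; rewrite // eq_sym.
  case=> [|[|[|[|i]]]] //= _; by rewrite e_sym.
case: (eqVneq b c') => [E|bc'0].
  by subst c'; rewrite cs' in bs.
case: (eqVneq c b') => [E|cb'].
  by subst b'; rewrite cs in b's.
apply: n6.
apply: (@cycle_seq 6 [:: t; b; c; s; c'; b'] t) => //.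
  apply: uniq6; rewrite // eq_sym //.
case=> [|[|[|[|[|[|i]]]]]] //= _; by rewrite e_sym.
Qed.

Lemma card_bigcup_le (I : finType) (P : pred I) (F : I -> {set T}) :
  #|\bigcup_(i | P i) F i| <= \sum_(i | P i) #|F i|.
Proof.
elim/big_rec2: _ => [|i X n _ H]; first by rewrite cards0.
rewrite cardsU; apply: leq_trans (leq_subr _ _) _; exact: leq_add.
Qed.

Lemma Jset_card (S : {set T}) : ~ has_cycle e 4 -> ~ has_cycle e 6 ->
  #|Jset S| <= #|S| * (#|S|).-1.
Proof.
move=> n4 n6; rewrite /Jset; apply: leq_trans (card_bigcup_le (fun i => i \in S) _) _.
rewrite -sum_nat_const; apply: leq_sum => t tS.
apply: leq_trans (card_bigcup_le (fun i => i \in S) _) _.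
rewrite (bigD1 t) //= Cset_tt cards0 add0n.
rewrite (cardsD1 t S) tS add1n /=.
rewrite -sum1_card.
rewrite [X in _ <= X](eq_bigl (fun i => (i \in S) && (i != t))); last first.
  by move=> i; rewrite !inE andbC.
by apply: leq_sum => i _; exact: Cset_le1.
Qed.

Lemma part2 (S : {set T}) : ~ has_cycle e 4 -> ~ has_cycle e 6 -> MLD_set e S ->
  LD_set e (S :|: Jset S) /\ #|S :|: Jset S| <= #|S| ^ 2.
Proof.
move=> n4 n6 H; split.
  apply: (key H).
  - by apply/subsetP => z zS; rewrite in_setU zS.
  - move=> a d b c aS dS Hm.
    case bd: (e b d).
      case ca: (e c a); first by case: n4; exact: C4_of Hm bd ca.
      apply/orP; left; rewrite in_setU; apply/orP; right.
      apply/bigcupP; exists d => //; apply/bigcupP; exists a => //.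
      by rewrite inE; apply/existsP; exists c; rewrite mid_rev // ca.
    apply/orP; right; rewrite in_setU; apply/orP; right.
    apply/bigcupP; exists a => //; apply/bigcupP; exists d => //.
    by rewrite inE; apply/existsP; exists b; rewrite Hm bd.
  - move=> a d b c aS dS Hm bd; rewrite in_setU; apply/orP; right.
    apply/bigcupP; exists a => //; apply/bigcupP; exists d => //.
    by rewrite inE; apply/existsP; exists b; rewrite Hm bd.
rewrite cardsU; apply: leq_trans (leq_subr _ _) _.
have := Jset_card S n4 n6.
case: #|S| => [|k] /=; first by rewrite muln0 leqn0 => /eqP ->.
by move=> h; rewrite expnS expn1 mulnS leq_add2l.
Qed.

End Main.

Lemma bigmin_le_seq (I : eqType) (r : seq I) (P : pred I) (F : I -> nat) x j :
  j \in r -> P j -> \big[minn/x]_(i <- r | P i) F i <= F j.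
Proof.
elim: r => // a r IH; rewrite inE big_cons => /orP [/eqP <- | jr] Pj.
  by rewrite Pj; exact: geq_minl.
case: (P a); last exact: IH.
exact: leq_trans (geq_minr _ _) (IH jr Pj).
Qed.

Theorem proposition5 (T : finType) (e : rel T)
  (e_sym : symmetric e) (e_irr : irreflexive e)
  (e_conn : connected_graph e) (card2 : 2 <= #|T|)
  (noC4 : ~ has_cycle e 4) (noC6 : ~ has_cycle e 6) :
  (forall S : {set T}, MLD_set e S -> LD_set e (S :|: pi_set e S)) /\
  gammaL e <= gammaM e ^ 2.
Proof.
split; first by move=> S HS; apply: part1.
rewrite /gammaM.
apply: (big_ind (fun m => gammaL e <= m ^ 2)).
- apply: (@leq_trans #|T|).
    rewrite /gammaL; apply: (big_ind (fun m => m <= #|T|)) => //.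
      by move=> a b ha hb; exact: leq_trans (geq_minl _ _) ha.
    by move=> S _; exact: max_card.
  by rewrite expnS expn1 leq_pmull // (leq_trans _ card2).
- move=> a b ha hb /=; case: (leqP a b) => h.
    by [].
  by [].
- move=> S HS.
  have [H1 H2] := part2 e_sym e_irr e_conn noC4 noC6 HS.
  apply: leq_trans H2.
  exact: bigmin_le_seq (mem_index_enum _) H1.
Qed.
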